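(* Let $S,T\subseteq\mathbb{Z}_{>0}$ be finite and let $x\in T$ be such that $T_{\ge x+1}\preceq S_{>x+1}$ and $x+1\notin S$. Then $x\notin T\triangleleft S$.
   Context: For a finite set $S\subseteq\mathbb{Z}_{>0}$, $S(i)$ denotes its $i$th smallest element, $S_{>y}=\{s\in S:s>y\}$, $S_{\ge y}=\{s\in S:s\ge y\}$. $T\preceq S$ means $|T|\ge|S|$ and $T(i)<S(i)$ for all $i\in[|S|]$. For finite $S,T$, $T\triangleleft S$ is computed by going through $S$ from largest to smallest; each $s$ picks the largest element of $T$ less than $s$ not yet picked (if one exists); $T\triangleleft S$ is the set of picked elements. *)

(* Defs.v *)
From mathcomp Require Import all_boot all_order.
From mathcomp Require Export finmap.
Set Implicit Arguments. Unset Strict Implicit. Unset Printing Implicit Defensive.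
Open Scope fset_scope.

(* Finite sets of positive integers are modelled as S : {fset nat} with
   all elements > 0 (hypothesis posset S). *)
Definition posset (S : {fset nat}) : Prop := forall s, s \in S -> 0 < s.

(* S(i), the i-th smallest element, 1-indexed (i in [1, #|S|]). *)
Definition ith (S : {fset nat}) (i : nat) : nat :=
  nth 0 (sort leq (enum_fset S)) i.-1.

Definition gtset (S : {fset nat}) (y : nat) : {fset nat} := [fset s in S | y < s].
Definition geset (S : {fset nat}) (y : nat) : {fset nat} := [fset s in S | y <= s].

Definition preceq (T S : {fset nat}) : Prop :=
  #|` S| <= #|` T| /\ forall i, 1 <= i <= #|` S| -> ith T i < ith S i.

Definition pick_step (T : {fset nat}) (picked : seq nat) (s : nat) : seq nat :=
  let cands := [seq t <- enum_fset T | (t < s) && (t \notin picked)] in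
  if cands is [::] then picked else (\max_(t <- cands) t) :: picked.

Definition tri (T S : {fset nat}) : {fset nat} :=
  [fset t | t in foldl (pick_step T) [::] (sort geq (enum_fset S))].

(* Main.v *)
Require Import Defs.
From mathcomp Require Import all_boot all_order.
From mathcomp Require Import finmap.
From mathcomp Require Import zify.
Open Scope fset_scope.

Lemma max_in (l : seq nat) : l != [::] -> \max_(t <- l) t \in l.
Proof.
elim: l => [|a l IH] // _; rewrite big_cons in_cons.
case: l IH => [|b l] IH; first by rewrite big_nil maxn0 eqxx.
have /IH H : b :: l != [::] by [].
case: (leqP a (\max_(t <- b :: l) t)) => h.
  by rewrite H orbT.
by rewrite eqxx.
Qed.

Lemma le_max (l : seq nat) t : t \in l -> t <= \max_(t <- l) t.
Proof.
elim: l => [|a l IH] //; rewrite big_cons in_cons => /orP [/eqP ->|h].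
  exact: leq_maxl.
exact: leq_trans (IH h) (leq_maxr _ _).
Qed.

Lemma count_rem (P : pred nat) m (l : seq nat) :
  count P l <= count (fun t => P t && (t != m)) l + count_mem m l.
Proof.
elim: l => [|a l IH] //=.
case: (P a); case: (eqVneq a m) => //= _; rewrite !add0n.
all: first [by rewrite addnCA leq_add2l | by rewrite addnA leq_add2l | by apply: (leq_trans IH); rewrite leq_add2l leq_addl | by rewrite add1n addnS ltnS | idtac].
Qed.

Definition cntA (T : {fset nat}) x (p : seq nat) s :=
  count (fun t => (x < t) && (t < s) && (t \notin p)) (enum_fset T).
Definition cntB x (r : seq nat) s :=
  count (fun s' => (x.+1 < s') && (s' <= s)) r.

Lemma cntB_cons x s r s' : cntB x r s' <= cntB x (s :: r) s'.
Proof. by rewrite /cntB /= leq_addl. Qed.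

Lemma fold_inv (T : {fset nat}) x : forall rest p, uniq rest -> sorted geq rest ->
  x.+1 \notin rest -> x \notin p ->
  (forall s', s' \in rest -> x.+1 < s' -> cntB x rest s' <= cntA T x p s') ->
  x \notin foldl (pick_step T) p rest.
Proof.
elim=> [|s rest IH] p //= /andP[snr ur] srt nx1 nxp inv.
have rest_lt : forall s', s' \in rest -> s' < s.
  move=> s' hs'.
  have geq_tr : transitive geq by move=> a b c h1 h2; exact: leq_trans h2 h1.
  have := allP (order_path_min geq_tr srt) s' hs' => /= h.
  rewrite ltn_neqAle h andbT; apply/eqP => e; subst s'.
  by rewrite hs' in snr.
have nx1r : x.+1 \notin rest by move: nx1; rewrite in_cons negb_or => /andP[].
have nx1s : s != x.+1 by move: nx1; rewrite in_cons negb_or eq_sym => /andP[].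
apply: IH => //; first exact: path_sorted srt.
  rewrite /pick_step.
  set cands := [seq t <- enum_fset T | (t < s) && (t \notin p)].
  have key : forall t, t \in cands = (t \in T) && (t < s) && (t \notin p).
    by move=> t; rewrite mem_filter andbC andbA.
  case E: cands => [|c cs] //.
  have mc : \max_(t <- c :: cs) t \in cands by rewrite E; apply: max_in.
  rewrite in_cons negb_or nxp andbT.
  case: (ltnP x.+1 s) => hs.
    have := inv s (mem_head _ _) hs.
    rewrite {1}/cntB /= hs leqnn /= => /(leq_trans (leq_addr _ _)).
    rewrite /cntA -has_count => /hasP [t tT /andP[/andP[h1 h2] h3]].
    have tc : t \in cands by rewrite key tT h2 h3.
    have h : t <= \max_(t <- c :: cs) t by apply: le_max; rewrite -E.
    apply/eqP => e; rewrite -e in h; lia.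
  move: mc; rewrite key => /andP[/andP[_ h] _].
  apply/eqP => e; rewrite -e in h.
  have : s <= x by move: nx1s hs; rewrite leq_eqVlt => /negbTE -> /=.
  lia.
move=> s' hs' hx.
have ss' := rest_lt s' hs'.
have hxs : x.+1 < s by lia.
have invs := inv s (mem_head _ _) hxs.
have B1 : cntB x rest s' <= cntB x (s :: rest) s' := cntB_cons _ _ _ _.
have B2 := inv s' ltac:(by rewrite in_cons hs' orbT) hx.
rewrite /pick_step.
set cands := [seq t <- enum_fset T | (t < s) && (t \notin p)].
have key : forall t, t \in cands = (t \in T) && (t < s) && (t \notin p).
  by move=> t; rewrite mem_filter andbC andbA.
case E: cands => [|c cs]; first exact: leq_trans B1 B2.
set m := \max_(t <- c :: cs) t.
have mx : forall t, t \in cands -> t <= m by move=> t; rewrite E; apply: le_max.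
case: (leqP s' m) => hm.
  have -> : cntA T x (m :: p) s' = cntA T x p s'.
    apply: eq_count => t /=; rewrite in_cons negb_or.
    case: (ltnP t s') => h //=; rewrite ?andbF //.
    have -> : (t != m) by apply/eqP => e; lia.
    by [].
  exact: leq_trans B1 B2.
have eqA : cntA T x p s' = cntA T x p s.
  apply: eq_in_count => t tT /=.
  case: (ltnP t s') => h1 /=.
    by rewrite (ltn_trans h1 ss').
  case: (ltnP t s) => h2 //=; rewrite ?andbF //.
  case: (boolP (t \in p)) => tp; rewrite ?andbF //= andbT.
  have : t \in cands by rewrite key tT h2 tp.
  move/mx => h; lia.
have invs' : (cntB x rest s).+1 <= cntA T x p s.
  by move: invs; rewrite hxs leqnn.
have mono : cntB x rest s' <= cntB x rest s.
  apply: sub_count => a /= /andP[-> h] /=; lia.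
have cr := count_rem (fun t => (x < t) && (t < s') && (t \notin p)) m (enum_fset T).
have -> : cntA T x (m :: p) s' =
   count (fun t => (x < t) && (t < s') && (t \notin p) && (t != m)) (enum_fset T).
  apply: eq_count => t /=; rewrite in_cons negb_or.
  by case: (t == m); rewrite /= ?andbF ?andbT.
have cm : count_mem m (enum_fset T) <= 1.
  by rewrite count_uniq_mem ?fset_uniq //; case: (_ \in _).
rewrite -ltnS; apply: (@leq_trans (cntB x rest s).+1); first by rewrite ltnS.
apply: (leq_trans invs'); rewrite -eqA.
apply: (leq_trans cr); by rewrite -[X in _ <= X]addn1 leq_add2l.
Qed.

Lemma count_sub (S : {fset nat}) (q P : pred nat) (r : rel nat) :
  (forall t, P t -> q t) ->
  count P (sort r (enum_fset [fset s in S | q s])) = count P (enum_fset S).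
Proof.
move=> Pq.
have h1 : perm_eq (sort r (enum_fset [fset s in S | q s])) (enum_fset [fset s in S | q s]).
  by rewrite perm_sort.
rewrite (permP h1).
have h2 : perm_eq (enum_fset [fset s in S | q s]) [seq s <- enum_fset S | q s].
  apply: uniq_perm; rewrite ?filter_uniq ?fset_uniq //.
  by move=> t; rewrite mem_filter !inE /= andbC.
rewrite (permP h2) count_filter; apply: eq_count => t /=.
by case E: (P t) => //=; rewrite (Pq _ E).
Qed.

Lemma core (sA sB : seq nat) s0 :
  size sB <= size sA -> (forall i, i < size sB -> nth 0 sA i < nth 0 sB i) ->
  sorted ltn sB -> s0 \in sB ->
  count (fun t => t <= s0) sB <= count (fun t => t < s0) sA.
Proof.
move=> hsz hnth srt s0B.
set k := index s0 sB.
have hk : k < size sB by rewrite index_mem.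
have hk0 : nth 0 sB k = s0 by rewrite nth_index.
have dec : sB = take k sB ++ s0 :: drop k.+1 sB.
  by rewrite -hk0 -drop_nth // cat_take_drop.
have L : count (fun t => t <= s0) sB <= k.+1.
  have srt' := srt; rewrite dec in srt'.
  have := (cat_sorted2 srt').2 => /= /(order_path_min ltn_trans) /allP al.
  have c0 : count (fun t => t <= s0) (drop k.+1 sB) = 0.
    apply/eqP; rewrite -leqn0 leqNgt -has_count; apply/hasPn => y /al /=.
    by rewrite ltnNge.
  rewrite dec count_cat /= c0 leqnn addn0 addn1 ltnS.
  by apply: (leq_trans (count_size _ _)); rewrite size_take hk.
apply: (leq_trans L).
have hkA : k.+1 <= size sA by apply: leq_trans hsz.
rewrite -(cat_take_drop k.+1 sA) count_cat.
apply: leq_trans (leq_addr _ _).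
have -> : count (fun t => t < s0) (take k.+1 sA) = k.+1.
  rewrite -{2}(size_takel hkA); apply/eqP; rewrite -all_count.
  apply/(all_nthP 0) => i; rewrite (size_takel hkA) => hi.
  rewrite nth_take //=.
  apply: (leq_trans (hnth i (leq_ltn_trans (leq_trans _ (leqnn k)) hk))); first by rewrite -ltnS.
  rewrite -hk0.
  have srtl : sorted leq sB by move: srt; rewrite ltn_sorted_uniq_leq => /andP[].
  apply: (sorted_leq_nth leq_trans leqnn 0 srtl) => //; rewrite inE.
    by apply: leq_ltn_trans hk; rewrite -ltnS.
by [].
Qed.

Theorem corollary4p13 (S T : {fset nat}) (x : nat) :
  posset S -> posset T -> x \in T ->
  preceq (geset T x.+1) (gtset S x.+1) ->
  x.+1 \notin S ->
  x \notin tri T S.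
Proof.
move=> _ _ _ [hsz hith] nx1.
rewrite /tri inE /=.
apply: fold_inv => //.
- by rewrite sort_uniq fset_uniq.
- by apply: sort_sorted => a b; exact: leq_total.
- by rewrite mem_sort.
move=> s' hs' hx.
rewrite mem_sort in hs'.
set sA := sort leq (enum_fset (geset T x.+1)).
set sB := sort leq (enum_fset (gtset S x.+1)).
have eB : cntB x (sort geq (enum_fset S)) s' = count (fun t => t <= s') sB.
  have hp : perm_eq (sort geq (enum_fset S)) (enum_fset S) by rewrite perm_sort.
  rewrite /cntB (permP hp) /sB /gtset.
  rewrite -(@count_sub S (fun s => x.+1 < s) _ leq); last by move=> t /andP[].
  apply: eq_in_count => t; rewrite mem_sort !inE /= => /andP[_ ->] //.
have eA : cntA T x [::] s' = count (fun t => t < s') sA.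
  rewrite /cntA /sA /geset.
  rewrite -(@count_sub T (fun s => x.+1 <= s) _ leq); last by move=> t /andP[/andP[]].
  apply: eq_in_count => t; rewrite mem_sort !inE /= => /andP[_ ->] //.
  by rewrite andbT.
rewrite eB eA; apply: core.
- by rewrite !size_sort.
- move=> i hi; have := hith i.+1; rewrite /ith /=; apply.
  by rewrite /= -(size_sort leq) hi.
- by rewrite ltn_sorted_uniq_leq sort_uniq fset_uniq sort_sorted //; exact: leq_total.
- by rewrite mem_sort !inE /= hs' hx.
Qed.
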